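(* Let $d\in\{2,3\}$, $\kappa>0$, $\sigma^{-1}=2\kappa$, $\rho(s)=(2/s)^{d/2}\Gamma(d/2+1)J_{d/2}(s)$ and $K(x,x')=\rho(\sigma^{-1}|x-x'|)$. Then for all $x,x'\in\mathbb{R}^d$ with $\sigma^{-1}|x-x'|/\sqrt{d+2}\ge 1/\sqrt5$, one has $|K(x,x')|\le 1-\bar\epsilon_0$ with $\bar\epsilon_0=0.07$.
   Context: $J_{d/2}$ is the Bessel function of the first kind of order $d/2$ and $\Gamma$ the Gamma function. $K$ coincides with $\int_{B(0,2\kappa)}e^{i\langle\omega,x-x'\rangle}\,d\Lambda(\omega)$ for $\Lambda$ uniform on $B(0,2\kappa)$. *)

(* Defs.v *)
From Stdlib Require Import Reals Arith Factorial.
From Coquelicot Require Import Coquelicot.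
Open Scope R_scope.

Definition Gamma (x : R) : R :=
  RInt_gen (fun t => Rpower t (x - 1) * exp (- t))
           (at_right 0) (Rbar_locally p_infty).

Definition BesselJ (nu s : R) : R :=
  Series (fun m : nat =>
    (-1) ^ m / (INR (Factorial.fact m) * Gamma (INR m + nu + 1))
    * Rpower (s / 2) (2 * INR m + nu)).

Definition rho (d : nat) (s : R) : R :=
  Rpower (2 / s) (INR d / 2) * Gamma (INR d / 2 + 1) * BesselJ (INR d / 2) s.

(* Euclidean norm on R^d; a point of R^d is represented by its coordinates
   x 0, ..., x (d-1) (coordinates of index >= d are ignored). *)
Definition eucl_dist (d : nat) (x x' : nat -> R) : R :=
  sqrt (sum_f_R0 (fun i => (x i - x' i) ^ 2) (d - 1)).

Definition Kern (d : nat) (kappa : R) (x x' : nat -> R) : R :=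
  rho d (2 * kappa * eucl_dist d x x').

(* Main.v *)
Require Import Defs.
From Stdlib Require Import Reals Lra Psatz Arith Factorial.
From Coquelicot Require Import Coquelicot.
Open Scope R_scope.

Definition gf (x t : R) := Rpower t (x - 1) * exp (- t).

Lemma exp_le_mono a b : a <= b -> exp a <= exp b.
Proof. intros [H|H]. left; now apply exp_increasing. right; now subst. Qed.

Lemma Rpower_pos t y : 0 < Rpower t y.
Proof. unfold Rpower; apply exp_pos. Qed.

Lemma gf_nonneg x t : 0 <= gf x t.
Proof. unfold gf. apply Rmult_le_pos; left; [apply Rpower_pos| apply exp_pos]. Qed.

Lemma poly_exp t : 0 <= t -> 1 + t^2 <= 16 * exp (t/2).
Proof.
  intros Ht. replace (t/2) with (t/4 + t/4) by field. rewrite exp_plus.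
  pose proof (exp_ineq1_le (t/4)). nra.
Qed.

Lemma Rpower_small t y : 0 < t <= 1 -> 0 <= y -> Rpower t y <= 1.
Proof.
  intros [H0 H1] Hy. unfold Rpower. rewrite <- exp_0. apply exp_le_mono.
  assert (ln t <= 0) by (rewrite <- ln_1; apply ln_le; lra). nra.
Qed.

Lemma gf_bound x t : 1 <= x <= 3 -> 0 < t -> gf x t <= 16 * exp (- t / 2).
Proof.
  intros Hx Ht. unfold gf.
  assert (Hp : Rpower t (x - 1) <= 1 + t^2).
  { destruct (Rle_dec t 1).
    - pose proof (Rpower_small t (x-1) (conj Ht r) ltac:(lra)). nra.
    - assert (Rpower t (x-1) <= Rpower t 2) by (apply Rle_Rpower; lra).
      replace 2 with (INR 2) in H by (simpl; ring). rewrite Rpower_pow in H by lra. lra. }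
  pose proof (poly_exp t ltac:(lra)).
  assert (E: exp (-t/2) = exp (t/2) * exp (-t)).
  { rewrite <- exp_plus. f_equal. field. }
  rewrite E. pose proof (exp_pos (-t)). nra.
Qed.

Lemma is_derive_Rpow y t : 0 < t -> is_derive (fun t => Rpower t y) t (y * Rpower t (y - 1)).
Proof. intros Ht. apply is_derive_Reals. now apply derivable_pt_lim_power. Qed.

Lemma is_derive_pe y t : 0 < t ->
  is_derive (fun t => Rpower t y * exp (- t)) t
    (y * Rpower t (y - 1) * exp (- t) - Rpower t y * exp (- t)).
Proof.
  intros Ht.
  assert (H1 := is_derive_Rpow y t Ht).
  assert (H2 : is_derive (fun t => exp (- t)) t (- exp (- t))).
  { auto_derive; auto. ring. }
  assert (E: y * Rpower t (y - 1) * exp (- t) - Rpower t y * exp (- t) =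
     plus (mult (y * Rpower t (y - 1)) (exp (- t))) (mult (Rpower t y) (- exp (- t)))).
  { unfold plus, mult; simpl. unfold mult; simpl. ring. }
  rewrite E.
  apply (is_derive_mult (fun t => Rpower t y) (fun t => exp (- t))); auto.
  intros; apply Rmult_comm.
Qed.

Lemma gf_continuous x t : 0 < t -> continuous (gf x) t.
Proof.
  intros Ht. apply (ex_derive_continuous (K:=R_AbsRing) (V:=R_NormedModule) (gf x)).
  eexists. unfold gf. apply (is_derive_pe (x-1) t Ht).
Qed.

Lemma ball_R (x y e : R) : ball x e y <-> Rabs (y - x) < e.
Proof. unfold ball; simpl; unfold AbsRing_ball, abs, minus, plus, opp; simpl. tauto. Qed.

Lemma ex_RInt_gf x p q : 0 < p -> 0 < q -> ex_RInt (gf x) p q.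
Proof.
  intros Hp Hq. apply (ex_RInt_continuous (V:=R_CompleteNormedModule)). intros z Hz. apply gf_continuous.
  assert (0 < Rmin p q) by (apply Rmin_glb_lt; lra). lra.
Qed.

Lemma RInt_exp_half p q :
  RInt (fun t => 16 * exp (- t / 2)) p q = 32 * (exp (- p / 2) - exp (- q / 2)).
Proof.
  apply is_RInt_unique.
  replace (32 * (exp (- p / 2) - exp (- q / 2))) with
    (minus ((fun t => - 32 * exp (- t / 2)) q) ((fun t => - 32 * exp (- t / 2)) p))
    by (unfold minus, plus, opp; simpl; ring).
  apply (is_RInt_derive (V:=R_CompleteNormedModule) (fun t => - 32 * exp (- t / 2)) (fun t => 16 * exp (- t / 2))).
  - intros z _. auto_derive; auto. lra.
  - intros z _. apply (ex_derive_continuous (K:=R_AbsRing) (V:=R_NormedModule)).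
    auto_derive; auto.
Qed.

Lemma RInt_gf_bound_le x p q : 1 <= x <= 3 -> 0 < p -> p <= q ->
  0 <= RInt (gf x) p q <= 32 * (exp (- p / 2) - exp (- q / 2)).
Proof.
  intros Hx Hp Hpq. split.
  - apply RInt_ge_0; auto. apply ex_RInt_gf; lra. intros; apply gf_nonneg.
  - rewrite <- RInt_exp_half. apply RInt_le; auto. apply ex_RInt_gf; lra.
    apply (ex_RInt_continuous (V:=R_CompleteNormedModule)). intros z _.
    apply (ex_derive_continuous (K:=R_AbsRing) (V:=R_NormedModule)). auto_derive; auto.
    intros t Ht. apply gf_bound; lra.
Qed.

Lemma RInt_gf_bound x p q : 1 <= x <= 3 -> 0 < p -> 0 < q ->
  Rabs (RInt (gf x) p q) <= 32 * Rabs (exp (- p / 2) - exp (- q / 2)).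
Proof.
  intros Hx Hp Hq. destruct (Rle_dec p q).
  - destruct (RInt_gf_bound_le x p q Hx Hp r).
    rewrite !Rabs_pos_eq; lra.
  - assert (q <= p) by lra. destruct (RInt_gf_bound_le x q p Hx Hq H).
    rewrite <- opp_RInt_swap by (apply ex_RInt_gf; lra).
    unfold opp; simpl. rewrite Rabs_Ropp.
    rewrite Rabs_pos_eq by lra. rewrite <- Rabs_Ropp, Rabs_pos_eq; lra.
Qed.

Lemma exp_half_near0 a : 0 < a -> 1 - a / 2 <= exp (- a / 2) <= 1.
Proof.
  intros Ha. split.
  - pose proof (exp_ineq1_le (- a / 2)). lra.
  - rewrite <- exp_0. apply exp_le_mono. lra.
Qed.

Lemma exp_half_large b : 0 < b -> 0 < exp (- b / 2) <= / (1 + b / 2).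
Proof.
  intros Hb. split. apply exp_pos.
  pose proof (exp_ineq1_le (b / 2)).
  assert (E : exp (- b / 2) = / exp (b / 2)).
  { replace (- b / 2) with (- (b / 2)) by field. apply exp_Ropp. }
  rewrite E. apply Rinv_le_contravar; lra.
Qed.

Lemma gamma_ex x : 1 <= x <= 3 ->
  exists l, is_RInt_gen (gf x) (at_right 0) (Rbar_locally p_infty) l.
Proof.
  intros Hx.
  apply (filterlimi_locally_cauchy (U:=R_CompleteNormedModule)
           (F:=filter_prod (at_right 0) (Rbar_locally p_infty))).
  - apply (Filter_prod _ _ _ (fun a => 0 < a) (fun b => 0 < b)).
    + exists (mkposreal 1 Rlt_0_1). intros; auto.
    + exists 0. intros; auto.
    + intros a b Ha Hb. simpl. split.
      * exists (RInt (gf x) a b). apply (RInt_correct (V:=R_CompleteNormedModule)).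
        apply ex_RInt_gf; auto.
      * intros y1 y2 H1 H2. apply (is_RInt_unique (V:=R_CompleteNormedModule)) in H1. apply (is_RInt_unique (V:=R_CompleteNormedModule)) in H2. congruence.
  - intros eps.
    set (d := eps / 64). set (M := 128 / eps).
    assert (Hd : 0 < d) by (unfold d; destruct eps; simpl; lra).
    assert (HM : 0 < M) by (unfold M; destruct eps; simpl; apply Rdiv_lt_0_compat; lra).
    exists (fun ab => 0 < fst ab < d /\ M < snd ab). split.
    + apply (Filter_prod _ _ _ (fun a => 0 < a < d) (fun b => M < b)).
      * exists (mkposreal d Hd). intros y Hy Hy0. change (Rabs (y - 0) < d) in Hy.
        rewrite Rminus_0_r, Rabs_pos_eq in Hy; lra.
      * exists M. auto.
      * intros; simpl; auto.
    + intros [a b] [a' b'] [Ha Hb] [Ha' Hb'] u' v' Hu Hv. simpl in *.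
      apply (is_RInt_unique (V:=R_CompleteNormedModule)) in Hu. apply (is_RInt_unique (V:=R_CompleteNormedModule)) in Hv.
      apply ball_R. subst u' v'.
      assert (E : RInt (gf x) a b = RInt (gf x) a a' + RInt (gf x) a' b' + RInt (gf x) b' b).
      { rewrite <- (RInt_Chasles (V:=R_CompleteNormedModule) (gf x) a a' b);
          try (apply ex_RInt_gf; lra).
        rewrite <- (RInt_Chasles (V:=R_CompleteNormedModule) (gf x) a' b' b);
          try (apply ex_RInt_gf; lra).
        unfold plus; simpl. ring. }
      rewrite E.
      pose proof (RInt_gf_bound x a a' Hx ltac:(lra) ltac:(lra)) as B1.
      pose proof (RInt_gf_bound x b' b Hx ltac:(lra) ltac:(lra)) as B2.
      destruct (exp_half_near0 a ltac:(lra)). destruct (exp_half_near0 a' ltac:(lra)).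
      destruct (exp_half_large b ltac:(lra)). destruct (exp_half_large b' ltac:(lra)).
      assert (HI : / (1 + M / 2) < eps / 64).
      { unfold M. destruct eps as [e He]; simpl in *.
        apply (Rmult_lt_reg_l (1 + 128 / e / 2)). 
        apply Rplus_lt_le_0_compat. lra. left; apply Rdiv_lt_0_compat; [apply Rdiv_lt_0_compat|]; lra.
        rewrite Rinv_r. 2: { assert (0 < 128 / e / 2) by (apply Rdiv_lt_0_compat; [apply Rdiv_lt_0_compat|]; lra). lra. }
        replace ((1 + 128 / e / 2) * (e / 64)) with (e/64 + 1) by (field; lra).
        lra. }
      assert (Rabs (exp (- a / 2) - exp (- a' / 2)) <= d / 2).
      { apply Rabs_le. lra. }
      assert (Rabs (exp (- b' / 2) - exp (- b / 2)) <= / (1 + M / 2)).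
      { assert (/ (1 + b / 2) <= / (1 + M / 2)) by (apply Rinv_le_contravar; lra).
        assert (/ (1 + b' / 2) <= / (1 + M / 2)) by (apply Rinv_le_contravar; lra).
        apply Rabs_le. lra. }
      assert (Rabs (RInt (gf x) a a' + RInt (gf x) a' b' + RInt (gf x) b' b - RInt (gf x) a' b')
              <= Rabs (RInt (gf x) a a') + Rabs (RInt (gf x) b' b)).
      { replace (RInt (gf x) a a' + RInt (gf x) a' b' + RInt (gf x) b' b - RInt (gf x) a' b')
          with (RInt (gf x) a a' + RInt (gf x) b' b) by ring. apply Rabs_triang. }
      rewrite Rabs_minus_sym.
      unfold d in *. destruct eps as [e He]; simpl in *. lra.
Qed.

Lemma Rpower_le_self a x : 0 < a <= 1 -> 1 <= x -> Rpower a x <= a.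
Proof.
  intros Ha Hx. unfold Rpower. rewrite <- (exp_ln a) at 2 by lra. apply exp_le_mono.
  assert (ln a <= 0) by (rewrite <- ln_1; apply ln_le; lra). nra.
Qed.

Lemma Rpower_exp_bound b x : 0 < b -> 0 < x ->
  Rpower b x <= Rpower (2 * x) x * exp (b / 2).
Proof.
  intros Hb Hx.
  assert (H1 : Rpower (b / (2 * x)) x <= Rpower (exp (b / (2 * x))) x).
  { apply Rle_Rpower_l. lra. split. apply Rdiv_lt_0_compat; lra.
    pose proof (exp_ineq1_le (b / (2 * x))). assert (0 < b / (2*x)) by (apply Rdiv_lt_0_compat; lra). lra. }
  assert (H2 : Rpower (exp (b / (2 * x))) x = exp (b / 2)).
  { unfold Rpower. rewrite ln_exp. f_equal. field. lra. }
  assert (H3 : Rpower (b / (2 * x)) x = Rpower b x * / Rpower (2 * x) x).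
  { unfold Rdiv. rewrite <- Rpower_mult_distr; try lra.
    f_equal. unfold Rpower. rewrite ln_Rinv by lra. rewrite <- exp_Ropp. f_equal. ring.
    apply Rinv_0_lt_compat; lra. }
  rewrite H3, H2 in H1. pose proof (Rpower_pos (2*x) x).
  apply (Rmult_le_compat_l (Rpower (2 * x) x)) in H1; [|lra].
  rewrite <- Rmult_assoc, (Rmult_comm _ (Rpower b x)), Rmult_assoc, Rinv_r in H1; lra.
Qed.

Definition hpe (x t : R) := Rpower t x * exp (- t).

Lemma hpe_lim0 x : 1 <= x -> filterlim (hpe x) (at_right 0) (locally 0).
Proof.
  intros Hx. apply filterlim_locally. intros eps.
  assert (Hd : 0 < Rmin 1 eps) by (apply Rmin_glb_lt; [lra | apply cond_pos]).
  exists (mkposreal _ Hd). intros y Hy Hy0. change (Rabs (y - 0) < Rmin 1 eps) in Hy.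
  rewrite Rminus_0_r, Rabs_pos_eq in Hy by lra.
  change (Rabs (hpe x y - 0) < eps). rewrite Rminus_0_r. unfold hpe.
  pose proof (Rmin_l 1 eps). pose proof (Rmin_r 1 eps).
  pose proof (Rpower_le_self y x ltac:(lra) Hx). pose proof (Rpower_pos y x).
  assert (exp (- y) <= 1) by (rewrite <- exp_0; apply exp_le_mono; lra).
  pose proof (exp_pos (- y)).
  rewrite Rabs_pos_eq by nra. nra.
Qed.

Lemma hpe_liminf x : 1 <= x -> filterlim (hpe x) (Rbar_locally p_infty) (locally 0).
Proof.
  intros Hx. apply filterlim_locally. intros eps.
  set (C := Rpower (2 * x) x). assert (HC : 0 < C) by apply Rpower_pos.
  destruct eps as [e He].
  exists (2 * C / e). intros b Hb. change (Rabs (hpe x b - 0) < e). rewrite Rminus_0_r.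
  assert (Hb0 : 0 < b) by (assert (0 < 2 * C / e) by (apply Rdiv_lt_0_compat; lra); lra).
  unfold hpe. pose proof (Rpower_exp_bound b x Hb0 ltac:(lra)). fold C in H.
  pose proof (Rpower_pos b x). pose proof (exp_pos (- b)).
  rewrite Rabs_pos_eq by nra.
  assert (E : exp (b / 2) * exp (- b) = exp (- b / 2)).
  { rewrite <- exp_plus. f_equal. field. }
  destruct (exp_half_large b Hb0).
  assert (Rpower b x * exp (- b) <= C * exp (- b / 2)) by (rewrite <- E; nra).
  assert (C * / (1 + b / 2) < e).
  { apply (Rmult_lt_reg_r (1 + b / 2)). lra. rewrite Rmult_assoc, Rinv_l by lra.
    assert (2 * C < e * b).
    { apply (Rmult_lt_compat_l e) in Hb; [|lra]. unfold Rdiv in Hb.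
      replace (e * (2 * C * / e)) with (2 * C) in Hb by (field; lra). lra. }
    nra. }
  nra.
Qed.

Definition dhpe (x t : R) := x * Rpower t (x - 1) * exp (- t) - Rpower t x * exp (- t).

Lemma Derive_hpe x t : 0 < t -> Derive (hpe x) t = dhpe x t.
Proof. intros Ht. apply is_derive_unique. unfold hpe, dhpe. now apply is_derive_pe. Qed.

Lemma dhpe_continuous x t : 0 < t -> continuous (dhpe x) t.
Proof.
  intros Ht. apply (ex_derive_continuous (K:=R_AbsRing) (V:=R_NormedModule)).
  unfold dhpe.
  apply (ex_derive_ext (fun t => minus (x * (Rpower t (x - 1) * exp (- t))) (Rpower t x * exp (- t)))).
  { intros; unfold minus, plus, opp; simpl; ring. }
  apply (ex_derive_minus (K:=R_AbsRing) (V:=R_NormedModule)).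
  - apply (ex_derive_scal (fun t => Rpower t (x - 1) * exp (- t))).
    eexists. apply (is_derive_pe (x-1) t Ht).
  - eexists. apply (is_derive_pe x t Ht).
Qed.

Lemma gamma_step x l : 1 <= x ->
  is_RInt_gen (gf x) (at_right 0) (Rbar_locally p_infty) l ->
  is_RInt_gen (gf (x + 1)) (at_right 0) (Rbar_locally p_infty) (x * l).
Proof.
  intros Hx Hl.
  assert (Hpos : filter_prod (at_right 0) (Rbar_locally p_infty)
     (fun ab => 0 < fst ab /\ 0 < snd ab)).
  { apply (Filter_prod _ _ _ (fun a => 0 < a) (fun b => 0 < b)).
    + exists (mkposreal 1 Rlt_0_1). intros; auto.
    + exists 0. intros; auto.
    + intros; simpl; auto. }
  assert (HD : is_RInt_gen (Derive (hpe x)) (at_right 0) (Rbar_locally p_infty) (0 - 0)).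
  { apply is_RInt_gen_Derive.
    - eapply filter_imp; [|exact Hpos]. intros [a b] [Ha Hb] t Ht. simpl in *.
      assert (0 < Rmin a b) by (apply Rmin_glb_lt; lra).
      eexists. unfold hpe. apply (is_derive_pe x t). lra.
    - eapply filter_imp; [|exact Hpos]. intros [a b] [Ha Hb] t Ht. simpl in *.
      assert (0 < Rmin a b) by (apply Rmin_glb_lt; lra).
      apply (continuous_ext_loc _ (dhpe x)).
      + assert (Ht2 : 0 < t / 2) by lra.
        exists (mkposreal _ Ht2). intros y Hy. change (Rabs (y - t) < t / 2) in Hy.
        symmetry. apply Derive_hpe. apply Rabs_def2 in Hy. lra.
      + apply dhpe_continuous. lra.
    - apply hpe_lim0; auto.
    - apply hpe_liminf; auto. }
  assert (HS := is_RInt_gen_scal _ x l Hl).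
  assert (HM := is_RInt_gen_minus _ _ _ _ HS HD).
  replace (x * l) with (minus (scal x l) (0 - 0))
    by (unfold minus, plus, opp, scal; simpl; unfold mult; simpl; ring).
  eapply is_RInt_gen_ext; [|exact HM].
  eapply filter_imp; [|exact Hpos]. intros [a b] [Ha Hb] t Ht. simpl in *.
  assert (0 < Rmin a b) by (apply Rmin_glb_lt; lra).
  rewrite Derive_hpe by lra. unfold minus, plus, opp, scal; simpl; unfold mult; simpl.
  unfold gf, dhpe. replace (x + 1 - 1) with x by ring. ring.
Qed.

Fixpoint cfun (nu : R) (m : nat) : R :=
  match m with O => 1 | S k => cfun nu k * (nu + 1 + INR k) end.

Lemma cfun_pos nu m : 0 <= nu -> 0 < cfun nu m.
Proof.
  intros Hn. induction m; simpl. lra. pose proof (pos_INR m). nra.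
Qed.

Lemma Gamma_is x l : is_RInt_gen (gf x) (at_right 0) (Rbar_locally p_infty) l -> Gamma x = l.
Proof.
  intros H. unfold Gamma. change (RInt_gen (gf x) (at_right 0) (Rbar_locally p_infty) = l).
  apply (is_RInt_gen_unique (V:=R_CompleteNormedModule)); auto.
Qed.

Lemma Gamma_rec nu m : 0 <= nu <= 2 ->
  Gamma (INR m + nu + 1) = cfun nu m * Gamma (nu + 1).
Proof.
  intros Hnu. destruct (gamma_ex (nu + 1) ltac:(lra)) as [l0 H0].
  rewrite (Gamma_is _ _ H0).
  assert (forall k, is_RInt_gen (gf (INR k + nu + 1)) (at_right 0) (Rbar_locally p_infty) (cfun nu k * l0)).
  { induction k.
    - simpl. replace (0 + nu + 1) with (nu + 1) by ring. rewrite Rmult_1_l. exact H0.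
    - rewrite S_INR. replace (INR k + 1 + nu + 1) with ((INR k + nu + 1) + 1) by ring.
      simpl. replace (cfun nu k * (nu + 1 + INR k) * l0) with ((INR k + nu + 1) * (cfun nu k * l0)) by ring.
      apply gamma_step. pose proof (pos_INR k). lra. exact IHk. }
  apply Gamma_is. apply H.
Qed.

Definition acoef (nu : R) (m : nat) : R :=
  (-1) ^ m / (INR (fact m) * cfun nu m * 4 ^ m).

Lemma Rpower_half_pow s m : 0 < s ->
  Rpower (s / 2) (2 * INR m) = (s ^ 2) ^ m / 4 ^ m.
Proof.
  intros Hs. replace (2 * INR m) with (INR (2 * m)) by (rewrite mult_INR; simpl; ring).
  rewrite Rpower_pow by lra. rewrite pow_mult.
  replace ((s / 2) ^ 2) with (s ^ 2 * / 4) by field.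
  rewrite Rpow_mult_distr, pow_inv. reflexivity.
Qed.

Lemma rho_eq d s : (d = 2%nat \/ d = 3%nat) -> 0 < s ->
  rho d s = 0 \/ rho d s = PSeries (acoef (INR d / 2)) (s ^ 2).
Proof.
  intros Hd Hs. set (nu := INR d / 2).
  assert (Hnu : 0 <= nu <= 2) by (unfold nu; destruct Hd; subst; simpl; lra).
  unfold rho, BesselJ. fold nu.
  set (G0 := Gamma (nu + 1)).
  destruct (Req_dec G0 0) as [HG|HG].
  - left. rewrite HG. ring.
  - right.
    rewrite (Series_ext _ (fun m => (Rpower (s / 2) nu / G0) * (acoef nu m * (s ^ 2) ^ m))).
    + rewrite Series_scal_l. unfold PSeries.
      replace (Rpower (2 / s) nu * G0 * (Rpower (s / 2) nu / G0 * Series (fun k => acoef nu k * (s ^ 2) ^ k)))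
        with ((Rpower (2 / s) nu * Rpower (s / 2) nu) * Series (fun k => acoef nu k * (s ^ 2) ^ k))
        by (field; auto).
      rewrite Rpower_mult_distr. replace (2 / s * (s / 2)) with 1 by (field; lra).
      unfold Rpower. rewrite ln_1, Rmult_0_r, exp_0. unfold scal; simpl. unfold mult; simpl. ring.
      apply Rdiv_lt_0_compat; lra. apply Rdiv_lt_0_compat; lra.
    + intros m. rewrite Gamma_rec by auto. fold G0.
      rewrite Rpower_plus, Rpower_half_pow by auto.
      unfold acoef.
      pose proof (cfun_pos nu m (proj1 Hnu)).
      pose proof (INR_fact_lt_0 m).
      assert (0 < 4 ^ m) by (apply pow_lt; lra).
      field. repeat split; lra.
Qed.

Lemma acoef_S nu m : 0 <= nu ->
  acoef nu (S m) = - acoef nu m / (4 * (INR m + 1) * (nu + 1 + INR m)).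
Proof.
  intros Hnu. unfold acoef. simpl cfun. rewrite fact_simpl, mult_INR, S_INR.
  pose proof (cfun_pos nu m Hnu). pose proof (INR_fact_lt_0 m). pose proof (pos_INR m).
  assert (0 < 4 ^ m) by (apply pow_lt; lra).
  simpl pow. field. repeat split; nra.
Qed.

Lemma acoef_nz nu m : 0 <= nu -> acoef nu m <> 0.
Proof.
  intros Hnu. unfold acoef. pose proof (cfun_pos nu m Hnu). pose proof (INR_fact_lt_0 m).
  assert (0 < 4 ^ m) by (apply pow_lt; lra).
  apply Rmult_integral_contrapositive_currified. apply pow_nonzero. lra.
  apply Rinv_neq_0_compat. assert (0 < INR (fact m) * cfun nu m * 4 ^ m) by (apply Rmult_lt_0_compat; nra). lra.
Qed.

Lemma acoef_CV nu : 0 <= nu -> CV_radius (acoef nu) = p_infty.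
Proof.
  intros Hnu. apply CV_radius_infinite_DAlembert.
  - intros; now apply acoef_nz.
  - apply (is_lim_seq_le_le_loc (fun _ => 0) _ (fun n => / INR n)).
    + exists 1%nat. intros n Hn.
      rewrite acoef_S by auto.
      assert (HnR : 1 <= INR n) by (apply (le_INR 1 n); lia).
      assert (Ha := acoef_nz nu n Hnu).
      replace (- acoef nu n / (4 * (INR n + 1) * (nu + 1 + INR n)) / acoef nu n)
        with (- / (4 * (INR n + 1) * (nu + 1 + INR n))) by (field; repeat split; try exact Ha; nra).
      rewrite Rabs_Ropp. rewrite Rabs_pos_eq by (left; apply Rinv_0_lt_compat; nra).
      split. left; apply Rinv_0_lt_compat; nra.
      apply Rinv_le_contravar. lra. nra.
    + apply is_lim_seq_const.
    + replace (Finite 0) with (Rbar_inv p_infty) by reflexivity.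
      apply is_lim_seq_inv. apply is_lim_seq_INR. discriminate.
Qed.

Lemma in_radius nu u : 0 <= nu -> Rbar_lt (Rabs u) (CV_radius (acoef nu)).
Proof. intros H; rewrite acoef_CV by auto; simpl; auto. Qed.

Lemma in_radius1 nu u : 0 <= nu -> Rbar_lt (Rabs u) (CV_radius (PS_derive (acoef nu))).
Proof. intros H; rewrite CV_radius_derive; now apply in_radius. Qed.

Lemma in_radius2 nu u : 0 <= nu -> Rbar_lt (Rabs u) (CV_radius (PS_derive (PS_derive (acoef nu)))).
Proof. intros H; rewrite !CV_radius_derive; now apply in_radius. Qed.

Lemma ode nu u : 0 <= nu ->
  4 * u * PSeries (PS_derive (PS_derive (acoef nu))) u
  + 4 * (nu + 1) * PSeries (PS_derive (acoef nu)) u + PSeries (acoef nu) u = 0.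
Proof.
  intros Hnu. set (a := acoef nu).
  rewrite Rmult_assoc, <- PSeries_incr_1.
  rewrite <- !PSeries_scal.
  assert (E1 : ex_pseries (PS_scal 4 (PS_incr_1 (PS_derive (PS_derive a)))) u).
  { apply ex_pseries_scal. intros; apply Rmult_comm. apply ex_pseries_incr_1.
    apply CV_radius_inside. now apply in_radius2. }
  assert (E2 : ex_pseries (PS_scal (4 * (nu + 1)) (PS_derive a)) u).
  { apply ex_pseries_scal. intros; apply Rmult_comm.
    apply CV_radius_inside. now apply in_radius1. }
  assert (E3 : ex_pseries a u) by (apply CV_radius_inside; now apply in_radius).
  rewrite <- PSeries_plus by auto.
  rewrite <- PSeries_plus by (auto; apply ex_pseries_plus; auto).
  rewrite <- (PSeries_const_0 u). apply PSeries_ext. intros n.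
  unfold PS_plus, PS_scal, PS_derive, PS_incr_1.
  destruct n as [|k].
  - unfold a. rewrite acoef_S by auto.
    replace (acoef nu 0) with 1 by (unfold acoef; simpl; field).
    unfold plus, scal, zero; simpl. unfold mult; simpl. field. lra.
  - unfold a. rewrite (acoef_S nu (S k)) by auto. rewrite !S_INR.
    unfold plus, scal, zero; simpl. unfold mult; simpl.
    pose proof (pos_INR k). field. nra.
Qed.

Definition Pn nu u := PSeries (acoef nu) u.
Definition P1 nu u := PSeries (PS_derive (acoef nu)) u.
Definition P2 nu u := PSeries (PS_derive (PS_derive (acoef nu))) u.
Definition Fen nu u := Pn nu u ^ 2 + 4 * u * P1 nu u ^ 2.

Lemma Fen_derive nu u : 0 <= nu ->
  is_derive (Fen nu) u (- (8 * nu + 4) * P1 nu u ^ 2).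
Proof.
  intros Hnu. unfold Fen, Pn, P1.
  auto_derive.
  - split. eexists; apply is_derive_PSeries; now apply in_radius.
    split; auto. eexists; apply is_derive_PSeries; now apply in_radius1.
  - rewrite !Derive_PSeries by (try apply in_radius; try apply in_radius1; auto).
    pose proof (ode nu u Hnu). fold (P2 nu u) in *. 
    nra.
Qed.

Lemma Fen_decr nu u0 u : 0 <= nu -> u0 <= u -> Fen nu u <= Fen nu u0.
Proof.
  intros Hnu Hu.
  destruct (MVT_gen (Fen nu) u0 u (fun t => - (8 * nu + 4) * P1 nu t ^ 2)) as [c [Hc E]].
  - intros; apply Fen_derive; auto.
  - intros t _. apply continuity_pt_filterlim.
    apply (ex_derive_continuous (K:=R_AbsRing) (V:=R_NormedModule)).
    eexists; apply Fen_derive; auto.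
  - assert (0 <= P1 nu c ^ 2) by (apply pow2_ge_0).
    assert (0 <= (8 * nu + 4) * P1 nu c ^ 2 * (u - u0)) by (apply Rmult_le_pos; [apply Rmult_le_pos|]; lra).
    lra.
Qed.

Lemma Pn_bound nu u0 u : 0 <= nu -> 0 <= u0 <= u -> Fen nu u0 <= 0.93 ^ 2 ->
  Rabs (Pn nu u) <= 0.93.
Proof.
  intros Hnu Hu HF. pose proof (Fen_decr nu u0 u Hnu (proj2 Hu)).
  assert (E : Fen nu u = Pn nu u ^ 2 + 4 * u * P1 nu u ^ 2) by reflexivity. assert (0 <= 4 * u * P1 nu u ^ 2) by (apply Rmult_le_pos; [lra | apply pow2_ge_0]).
  assert (Pn nu u ^ 2 <= 0.93 ^ 2) by lra.
  rewrite <- (Rabs_pos_eq 0.93) by lra. apply Rsqr_le_abs_0. unfold Rsqr. nra.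
Qed.

Lemma series_tail (b : nat -> R) K q : 0 <= q < 1 -> ex_series b ->
  (forall n, (S K <= n)%nat -> Rabs (b (S n)) <= q * Rabs (b n)) ->
  Rabs (Series b - sum_f_R0 b K) <= Rabs (b (S K)) / (1 - q).
Proof.
  intros Hq Hb Hr.
  rewrite (Series_incr_n b (S K)) by (auto; lia). simpl pred.
  replace (sum_f_R0 b K + Series (fun k => b (S K + k)%nat) - sum_f_R0 b K)
    with (Series (fun k => b (S K + k)%nat)) by ring.
  set (C := Rabs (b (S K))).
  assert (Hg : forall k, Rabs (b (S K + k)%nat) <= C * q ^ k).
  { induction k.
    - rewrite Nat.add_0_r. simpl. unfold C; lra.
    - replace (S K + S k)%nat with (S (S K + k)) by lia.
      eapply Rle_trans. apply Hr. lia. simpl.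
      rewrite <- Rmult_assoc, (Rmult_comm C q), Rmult_assoc.
      apply Rmult_le_compat_l. lra. exact IHk. }
  assert (HG : is_series (fun k => C * q ^ k) (C / (1 - q))).
  { assert (H0 : is_series (fun k => q ^ k) (/ (1 - q))) by (apply is_series_geom; rewrite Rabs_pos_eq; lra).
    assert (H1 := is_series_scal_l (V:=R_NormedModule) C _ _ H0).
    unfold scal in H1; simpl in H1; unfold mult in H1; simpl in H1. exact H1. }
  assert (HE : ex_series (fun k => Rabs (b (S K + k)%nat))).
  { apply (ex_series_le (K:=R_AbsRing) (V:=R_CompleteNormedModule) _ (fun k => C * q ^ k)). 2: (eexists; exact HG).
    intros n. unfold norm; simpl. unfold abs; simpl. rewrite Rabs_Rabsolu. apply Hg. }
  eapply Rle_trans. apply Series_Rabs. exact HE.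
  rewrite <- (is_series_unique _ _ HG).
  apply Series_le. intros n; split. apply Rabs_pos. apply Hg.
  eexists; exact HG.
Qed.

Lemma acoef_vals nu : 0 <= nu ->
  acoef nu 0 = 1 /\ acoef nu 1 = - / (4 * (nu + 1)) /\
  acoef nu 2 = / (32 * (nu + 1) * (nu + 2)) /\
  acoef nu 3 = - / (384 * (nu + 1) * (nu + 2) * (nu + 3)) /\
  acoef nu 4 = / (6144 * (nu + 1) * (nu + 2) * (nu + 3) * (nu + 4)).
Proof.
  intros Hnu.
  assert (A0 : acoef nu 0 = 1) by (unfold acoef; simpl; field).
  assert (A1 : acoef nu 1 = - / (4 * (nu + 1))).
  { rewrite acoef_S, A0 by auto. simpl. field. lra. }
  assert (A2 : acoef nu 2 = / (32 * (nu + 1) * (nu + 2))).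
  { rewrite acoef_S, A1 by auto. simpl. field. lra. }
  assert (A3 : acoef nu 3 = - / (384 * (nu + 1) * (nu + 2) * (nu + 3))).
  { rewrite acoef_S, A2 by auto. simpl. field. lra. }
  assert (A4 : acoef nu 4 = / (6144 * (nu + 1) * (nu + 2) * (nu + 3) * (nu + 4))).
  { rewrite acoef_S, A3 by auto. simpl. field. lra. }
  auto.
Qed.

Lemma Pn_approx nu u : 0 <= nu -> 0 <= u <= 1 ->
  Rabs (Pn nu u - (acoef nu 0 + acoef nu 1 * u + acoef nu 2 * u ^ 2))
    <= Rabs (acoef nu 3 * u ^ 3) / (1 - / 64).
Proof.
  intros Hnu Hu. unfold Pn, PSeries.
  replace (acoef nu 0 + acoef nu 1 * u + acoef nu 2 * u ^ 2)
    with (sum_f_R0 (fun k => acoef nu k * u ^ k) 2) by (simpl; ring).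
  apply (series_tail (fun k => acoef nu k * u ^ k) 2 (/ 64)).
  - split. left; apply Rinv_0_lt_compat; lra. apply (Rmult_lt_reg_l 64); [lra|]. rewrite Rinv_r; lra.
  - assert (H := CV_radius_inside _ u (in_radius nu u Hnu)).
    eapply ex_series_ext; [|exact H]. intros n. simpl. rewrite pow_n_pow.
    unfold scal; simpl; unfold mult; simpl. ring.
  - intros n Hn. rewrite acoef_S by auto. simpl pow.
    assert (HnR : 3 <= INR n) by (replace 3 with (INR 3) by (simpl; ring); apply le_INR; lia).
    set (D := 4 * (INR n + 1) * (nu + 1 + INR n)).
    assert (HD : 64 <= D) by (unfold D; nra).
    replace (- acoef nu n / D * (u * u ^ n)) with ((acoef nu n * u ^ n) * (- (u / D))) by (field; lra).
    rewrite Rabs_mult, Rabs_Ropp, (Rabs_pos_eq (u / D)) by (apply Rmult_le_pos; [lra| left; apply Rinv_0_lt_compat; lra]).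
    rewrite Rmult_comm. apply Rmult_le_compat_r. apply Rabs_pos.
    unfold Rdiv. apply (Rmult_le_reg_l D). lra.
    rewrite <- Rmult_assoc, (Rmult_comm D u), Rmult_assoc, Rinv_r by lra.
    assert (1 <= D * / 64).
    { replace 1 with (64 * / 64) at 1 by field. apply Rmult_le_compat_r; [left; apply Rinv_0_lt_compat; lra | lra]. }
    lra.
Qed.

Lemma P1_approx nu u : 0 <= nu -> 0 <= u <= 1 ->
  Rabs (P1 nu u - (acoef nu 1 + 2 * acoef nu 2 * u + 3 * acoef nu 3 * u ^ 2))
    <= Rabs (4 * acoef nu 4 * u ^ 3) / (1 - / 64).
Proof.
  intros Hnu Hu. unfold P1, PSeries.
  replace (acoef nu 1 + 2 * acoef nu 2 * u + 3 * acoef nu 3 * u ^ 2)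
    with (sum_f_R0 (fun k => PS_derive (acoef nu) k * u ^ k) 2) by (unfold PS_derive; simpl; ring).
  replace (4 * acoef nu 4 * u ^ 3) with (PS_derive (acoef nu) 3 * u ^ 3) by (unfold PS_derive; simpl; ring).
  apply (series_tail (fun k => PS_derive (acoef nu) k * u ^ k) 2 (/ 64)).
  - split. left; apply Rinv_0_lt_compat; lra. apply (Rmult_lt_reg_l 64); [lra|]. rewrite Rinv_r; lra.
  - assert (H := CV_radius_inside _ u (in_radius1 nu u Hnu)).
    eapply ex_series_ext; [|exact H]. intros n. simpl. rewrite pow_n_pow.
    unfold scal; simpl; unfold mult; simpl. ring.
  - intros n Hn. unfold PS_derive. rewrite (acoef_S nu (S n)) by auto. simpl pow.
    assert (HnR : 3 <= INR n) by (replace 3 with (INR 3) by (simpl; ring); apply le_INR; lia).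
    rewrite !S_INR.
    set (D := 4 * (INR n + 1) * (nu + 1 + (INR n + 1))).
    assert (HD : 64 <= D) by (unfold D; nra).
    replace ((INR n + 1 + 1) * (- acoef nu (S n) / (4 * (INR n + 1 + 1) * (nu + 1 + (INR n + 1)))) * (u * u ^ n))
      with (((INR n + 1) * acoef nu (S n) * u ^ n) * (- (u / D))) by (unfold D; field; nra).
    rewrite Rabs_mult, Rabs_Ropp, (Rabs_pos_eq (u / D)) by (apply Rmult_le_pos; [lra| left; apply Rinv_0_lt_compat; lra]).
    rewrite Rmult_comm. apply Rmult_le_compat_r. apply Rabs_pos.
    unfold Rdiv. apply (Rmult_le_reg_l D). lra.
    rewrite <- Rmult_assoc, (Rmult_comm D u), Rmult_assoc, Rinv_r by lra.
    assert (1 <= D * / 64).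
    { replace 1 with (64 * / 64) at 1 by field. apply Rmult_le_compat_r; [left; apply Rinv_0_lt_compat; lra | lra]. }
    lra.
Qed.

Lemma Fen_num_gen nu u p e p1 e1 :
  0 <= nu -> 0 <= u <= 1 ->
  acoef nu 0 + acoef nu 1 * u + acoef nu 2 * u ^ 2 = p ->
  Rabs (acoef nu 3 * u ^ 3) / (1 - / 64) = e ->
  acoef nu 1 + 2 * acoef nu 2 * u + 3 * acoef nu 3 * u ^ 2 = p1 ->
  Rabs (4 * acoef nu 4 * u ^ 3) / (1 - / 64) = e1 ->
  0 < p - e -> p1 + e1 < 0 ->
  (p + e) ^ 2 + 4 * u * (p1 - e1) ^ 2 <= 0.93 ^ 2 ->
  Fen nu u <= 0.93 ^ 2.
Proof.
  intros Hnu Hu Ep Ee Ep1 Ee1 H1 H2 H3.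
  pose proof (Pn_approx nu u Hnu Hu) as A. rewrite Ep, Ee in A.
  pose proof (P1_approx nu u Hnu Hu) as B. rewrite Ep1, Ee1 in B.
  unfold Fen.
  apply Rabs_le_between' in A. apply Rabs_le_between' in B.
  assert (Pn nu u ^ 2 <= (p + e) ^ 2) by nra.
  assert (P1 nu u ^ 2 <= (p1 - e1) ^ 2) by nra.
  assert (4 * u * P1 nu u ^ 2 <= 4 * u * (p1 - e1) ^ 2) by (apply Rmult_le_compat_l; lra).
  lra.
Qed.

Ltac fen_close A0 A1 A2 A3 A4 :=
  first
  [ rewrite A0, A1, A2; field
  | rewrite A1, A2, A3; field
  | match goal with |- Rabs ?t / _ = _ =>
      (replace t with (- (t * -1)) by ring);
      rewrite Rabs_Ropp, Rabs_pos_eq; [ rewrite ?A3, ?A4; field | rewrite ?A3, ?A4; simpl; lra ] end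
  | match goal with |- Rabs ?t / _ = _ =>
      rewrite Rabs_pos_eq; [ rewrite ?A3, ?A4; field | rewrite ?A3, ?A4; simpl; lra ] end ].

Lemma Fen_num1 : Fen 1 (4 / 5) <= 0.93 ^ 2.
Proof.
  destruct (acoef_vals 1 ltac:(lra)) as [A0 [A1 [A2 [A3 A4]]]].
  apply (Fen_num_gen 1 (4/5) (271/300) (4/70875) (-187/1600) (1/354375)); try lra.
  all: fen_close A0 A1 A2 A3 A4.
Qed.

Lemma Fen_num2 : Fen (3/2) 1 <= 0.93 ^ 2.
Proof.
  destruct (acoef_vals (3/2) ltac:(lra)) as [A0 [A1 [A2 [A3 A4]]]].
  apply (Fen_num_gen (3/2) 1 (253/280) (4/59535) (-67/720) (2/654885)); try lra.
  all: fen_close A0 A1 A2 A3 A4.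
Qed.

Lemma sq_bound s D : 0 < D -> s / sqrt D >= 1 / sqrt 5 -> D / 5 <= s ^ 2 /\ 0 < s.
Proof.
  intros HD H.
  assert (Ha : 0 < sqrt D) by (apply sqrt_lt_R0; auto).
  assert (Hb : 0 < sqrt 5) by (apply sqrt_lt_R0; lra).
  assert (H1 : sqrt D <= s * sqrt 5).
  { apply Rge_le in H. unfold Rdiv in H.
    apply (Rmult_le_compat_r (sqrt D * sqrt 5)) in H; [|nra].
    replace (1 * / sqrt 5 * (sqrt D * sqrt 5)) with (sqrt D) in H by (field; lra).
    replace (s * / sqrt D * (sqrt D * sqrt 5)) with (s * sqrt 5) in H by (field; lra).
    exact H. }
  assert (Hs : 0 < s) by nra.
  split; auto.
  assert (E1 : sqrt D * sqrt D = D) by (apply sqrt_sqrt; lra).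
  assert (E2 : sqrt 5 * sqrt 5 = 5) by (apply sqrt_sqrt; lra).
  assert (D <= s ^ 2 * 5) by nra. lra.
Qed.

Theorem lemma4 :
  forall (d : nat) (kappa : R),
    (d = 2%nat \/ d = 3%nat) -> 0 < kappa ->
    forall x x' : nat -> R,
      (2 * kappa) * eucl_dist d x x' / sqrt (INR d + 2) >= 1 / sqrt 5 ->
      Rabs (Kern d kappa x x') <= 1 - 0.07.
Proof.
  intros d kappa Hd Hk x x' H.
  unfold Kern. set (s := 2 * kappa * eucl_dist d x x') in *.
  assert (HD : 0 < INR d + 2) by (pose proof (pos_INR d); lra).
  destruct (sq_bound s _ HD H) as [Hu Hs].
  destruct (rho_eq d s Hd Hs) as [E|E]; rewrite E.
  - rewrite Rabs_R0. lra.
  - change (PSeries (acoef (INR d / 2)) (s ^ 2)) with (Pn (INR d / 2) (s ^ 2)).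
    assert (Rabs (Pn (INR d / 2) (s ^ 2)) <= 0.93); [|lra].
    destruct Hd; subst d.
    + replace (INR 2 / 2) with 1 by (simpl; field).
      apply (Pn_bound 1 (4/5)). lra. split. lra. simpl in Hu. lra. apply Fen_num1.
    + replace (INR 3 / 2) with (3/2) by (simpl; field).
      apply (Pn_bound (3/2) 1). lra. split. lra. simpl in Hu. lra. apply Fen_num2.
Qed.
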